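(* Let $X=\{a,\dots,b\}\subseteq\mathbb{N}$ and let $f^p:\mathcal{P}^n\to X$ be a non-dictatorial generalized median voter scheme with monotonic family of fixed ballots $p=\{p_S\}_{S\in 2^N}$. Then $f^p$ is NOM if and only if, for each $i\in N$, $p_{N\setminus\{i\}}\in\{a,a+1\}$ and $p_{\{i\}}\in\{b-1,b\}$.
   Context: $N=\{1,\dots,n\}$, $n\ge2$; $X=\{a,a+1,\dots,b\}$, $|X|\ge2$; $\mathcal{P}$ all strict linear orders on $X$; $t(P_i)$ the top of $P_i$. A monotonic family of fixed ballots is $p=\{p_S\}_{S\subseteq N}$ with $p_S\in X$, $p_N=a$, $p_\emptyset=b$, and $p_Q\le p_T$ whenever $T\subseteq Q$. The generalized median voter scheme is $f^p(P)=\min_{S\subseteq N}\max_{j\in S}\{t(P_j),p_S\}$. A rule is dictatorial if there is $i$ with $f(P)=t(P_i)$ for all $P$. Option set $O(P_i)=\{f(P_i,P_{-i}):P_{-i}\in\mathcal{P}^{n-1}\}$. $P_i'$ is a manipulation at $P_i$ if $f(P_i',P_{-i})P_if(P_i,P_{-i})$ for some $P_{-i}$; it is obvious if the $P_i$-worst element of $O(P_i')$ is strictly $P_i$-better than that of $O(P_i)$, or the $P_i$-best element of $O(P_i')$ is strictly $P_i$-better than that of $O(P_i)$. NOM means no obvious manipulation exists. *)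

(* Defs.v *)
From mathcomp Require Import all_boot all_order.
Set Implicit Arguments. Unset Strict Implicit. Unset Printing Implicit Defensive.

Definition Xs (a b : nat) : seq nat := iota a (b - a + 1).

(* A strict linear order on X, encoded as its ranking: a list enumerating
   X exactly once, best first. *)
Definition pref (a b : nat) := {s : seq nat | perm_eq s (Xs a b)}.

Definition top (a b : nat) (P : pref a b) : nat := head a (val P).

Definition prefers (a b : nat) (P : pref a b) (x y : nat) : bool :=
  index x (val P) < index y (val P).

Definition profile (n a b : nat) := 'I_n -> pref a b.

Definition upd (n a b : nat) (P : profile n a b) (i : 'I_n) (Pi : pref a b)
  : profile n a b := fun j => if j == i then Pi else P j.

Definition monotonic_ballots (n a b : nat) (p : {set 'I_n} -> nat) : Prop :=
  [/\ p setT = a, p set0 = b, (forall S, a <= p S <= b)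
    & (forall Q T : {set 'I_n}, T \subset Q -> p Q <= p T)].

Definition gmvs (n a b : nat) (p : {set 'I_n} -> nat) (P : profile n a b) : nat :=
  \big[minn/b]_(S : {set 'I_n}) maxn (\max_(j in S) top (P j)) (p S).

Definition dictatorial (n a b : nat) (f : profile n a b -> nat) : Prop :=
  exists i : 'I_n, forall P : profile n a b, f P = top (P i).

Definition option_set (n a b : nat) (f : profile n a b -> nat) (i : 'I_n)
  (Pi : pref a b) (x : nat) : Prop :=
  exists P : profile n a b, f (upd P i Pi) = x.

Definition is_worst (a b : nat) (Pi : pref a b) (O : nat -> Prop) (w : nat) : Prop :=
  O w /\ forall o, O o -> o <> w -> prefers Pi o w.

Definition is_best (a b : nat) (Pi : pref a b) (O : nat -> Prop) (w : nat) : Prop :=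
  O w /\ forall o, O o -> o <> w -> prefers Pi w o.

Definition manipulation (n a b : nat) (f : profile n a b -> nat) (i : 'I_n)
  (Pi Pi' : pref a b) : Prop :=
  exists P : profile n a b, prefers Pi (f (upd P i Pi')) (f (upd P i Pi)).

Definition obvious_manipulation (n a b : nat) (f : profile n a b -> nat) (i : 'I_n)
  (Pi Pi' : pref a b) : Prop :=
  manipulation f i Pi Pi' /\
  ((exists w' w, is_worst Pi (option_set f i Pi') w' /\
                 is_worst Pi (option_set f i Pi) w /\ prefers Pi w' w) \/
   (exists b' b0, is_best Pi (option_set f i Pi') b' /\
                  is_best Pi (option_set f i Pi) b0 /\ prefers Pi b' b0)).

Definition NOM (n a b : nat) (f : profile n a b -> nat) : Prop :=
  forall (i : 'I_n) (Pi Pi' : pref a b), ~ obvious_manipulation f i Pi Pi'.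

(* Main.v *)
Require Import Defs.
From mathcomp Require Import all_boot all_order zify.

Lemma memX a b x (hab : a <= b) : (x \in Xs a b) = (a <= x <= b).
Proof. rewrite /Xs mem_iota; apply/idP/idP; lia. Qed.

Lemma valP_mem a b (hab : a <= b) (P : pref a b) x : (x \in val P) = (a <= x <= b).
Proof. by rewrite (perm_mem (valP P)) memX. Qed.

Lemma top_in a b (hab : a <= b) (P : pref a b) : a <= top P <= b.
Proof.
rewrite /top; case: P => [[|h s] /= hs].
  by move: (perm_size hs); rewrite /Xs size_iota; lia.
by rewrite -memX // -(perm_mem hs) mem_head.
Qed.

Lemma index_top a b (hab : a <= b) (P : pref a b) : index (top P) (val P) = 0.
Proof.
rewrite /top; case: P => [[|h s] /= hs].
  by move: (perm_size hs); rewrite /Xs size_iota; lia.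
by rewrite eqxx.
Qed.

Lemma not_pref_top a b (hab : a <= b) (P : pref a b) x : ~~ prefers P x (top P).
Proof. by rewrite /prefers index_top. Qed.

Lemma prefers_ne a b (hab : a <= b) (P : pref a b) x y : a <= x <= b -> a <= y <= b -> x != y ->
  (prefers P x y) || (prefers P y x).
Proof.
move=> hx hy hne; rewrite /prefers.
have: index x (val P) != index y (val P).
  apply: contra hne => /eqP h; apply/eqP; apply: (index_inj 0) h;
  by rewrite valP_mem.
lia.
Qed.

Lemma prefers_asym a b (P : pref a b) x y : prefers P x y -> ~~ prefers P y x.
Proof. rewrite /prefers; lia. Qed.

Lemma exists_worst_seq (s : seq nat) (g : nat -> nat) : s != [::] ->
  exists2 w, w \in s & forall o, o \in s -> g o <= g w.
Proof.
elim: s => [//|x s IH] _.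
case: (altP (s =P [::])) => [->|hs].
  by exists x; rewrite ?mem_head // => o; rewrite inE => /eqP ->.
have [w hw hmax] := IH hs.
case: (leqP (g x) (g w)) => h.
  exists w; first by rewrite inE hw orbT.
  by move=> o; rewrite inE => /orP [/eqP ->|]; [|apply: hmax].
exists x; first by rewrite mem_head.
move=> o; rewrite inE => /orP [/eqP ->//|/hmax]; lia.
Qed.

Lemma exists_worst a b (hab : a <= b) (P : pref a b) (O : nat -> Prop) lo hi :
  a <= lo -> lo <= hi -> hi <= b -> (forall x, O x <-> lo <= x <= hi) ->
  exists w, is_worst P O w.
Proof.
move=> h1 h2 h3 hO.
have [|w hw hmax] := exists_worst_seq (iota lo (hi - lo + 1)) (fun x => index x (val P)).
  by rewrite -size_eq0 size_iota; lia.
move: hw; rewrite mem_iota => hw.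
exists w; split; first by apply/hO; lia.
move=> o /hO ho hne.
have := @prefers_ne a b hab P o w.
have := hmax o; rewrite mem_iota.
have ho' : (lo <= o < lo + (hi - lo + 1)) by lia.
move=> /(_ ho') hle.
move=> /(_ ltac:(lia) ltac:(lia) (introN eqP hne)) /orP [//|].
rewrite /prefers; lia.
Qed.

Lemma bigmin_lb (I : finType) (F : I -> nat) d y :
  y <= d -> (forall S, y <= F S) -> y <= \big[minn/d]_S F S.
Proof.
move=> hd hF; elim/big_ind: _ => // x z hx hz; rewrite leq_min hx hz //.
Qed.

Lemma bigmin_ub (I : finType) (F : I -> nat) d S0 : \big[minn/d]_S F S <= F S0.
Proof.
have : S0 \in index_enum I by rewrite mem_index_enum.
elim: (index_enum I) => [//|x r IH]; rewrite inE big_cons => /orP [/eqP <-|h].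
  exact: geq_minl.
apply: leq_trans (geq_minr _ _) _; exact: IH.
Qed.

Lemma gmvs_ub n a b (p : {set 'I_n} -> nat) (P : profile n a b) (S : {set 'I_n}) :
  gmvs p P <= maxn (\max_(j in S) top (P j)) (p S).
Proof. rewrite /gmvs; exact: (@bigmin_ub {set 'I_n} _ b S). Qed.

Lemma gmvs_lb n a b (p : {set 'I_n} -> nat) (P : profile n a b) y : y <= b ->
  (forall S : {set 'I_n}, y <= maxn (\max_(j in S) top (P j)) (p S)) -> y <= gmvs p P.
Proof. move=> hb hS; rewrite /gmvs; exact: (@bigmin_lb {set 'I_n} _ b y hb hS). Qed.

Lemma maxn_le x z y : x <= y -> z <= y -> maxn x z <= y.
Proof. by move=> h1 h2; rewrite geq_max h1 h2. Qed.

Lemma top_upd n a b (Q : profile n a b) (i : 'I_n) Pi j :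
  top (upd Q i Pi j) = if j == i then top Pi else top (Q j).
Proof. by rewrite /upd; case: (j == i). Qed.

Lemma f_lower n a b (p : {set 'I_n} -> nat) (hab : a <= b) (hp : monotonic_ballots a b p) (P : profile n a b) (i : 'I_n) :
  minn (top (P i)) (p (setT :\ i)) <= gmvs p P.
Proof.
case: hp => _ hb hr hm.
rewrite /gmvs; apply: bigmin_lb.
  have := hr (setT :\ i); lia.
move=> S; case: (boolP (i \in S)) => hi.
  apply: leq_trans (geq_minl _ _) _; apply: leq_trans (leq_maxl _ _).
  by apply: leq_bigmax_cond.
apply: leq_trans (geq_minr _ _) _; apply: leq_trans (leq_maxr _ _).
apply: hm; apply/subsetP => j hj; rewrite !inE andbT.
by apply/negP => /eqP e; move: hi; rewrite -e hj.
Qed.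

Lemma f_upper n a b (p : {set 'I_n} -> nat) (P : profile n a b) (i : 'I_n) :
  gmvs p P <= maxn (top (P i)) (p [set i]).
Proof.
rewrite /gmvs; apply: leq_trans; first exact: (@bigmin_ub {set 'I_n} _ b [set i]).
have hX : \max_(j in [set i]) top (P j) <= top (P i).
  by apply/bigmax_leqP => j; rewrite inE => /eqP ->.
cbv beta; rewrite geq_max leq_maxr andbT; exact: leq_trans hX (leq_maxl _ _).
Qed.

Lemma exists_pref_top a b (hab : a <= b) y : a <= y <= b -> exists P : pref a b, top P = y.
Proof.
move=> hy.
have hp : perm_eq (y :: rem y (Xs a b)) (Xs a b).
  by rewrite perm_sym; apply: perm_to_rem; rewrite memX.
by exists (exist (fun s => perm_eq s (Xs a b)) _ hp).
Qed.

Lemma achieve n a b (p : {set 'I_n} -> nat) (hab : a <= b) (hp : monotonic_ballots a b p) (i : 'I_n) (Pi : pref a b) y :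
  minn (top Pi) (p (setT :\ i)) <= y <= maxn (top Pi) (p [set i]) ->
  exists Q : profile n a b, gmvs p (upd Q i Pi) = y.
Proof.
move=> hy.
have ht := @top_in _ _ hab Pi.
have [hN h0 hr hm] := hp.
have hyX : a <= y <= b.
  have := hr (setT :\ i); have := hr [set i]; lia.
have [Py hPy] := @exists_pref_top _ _ hab _ hyX.
exists (fun _ => Py).
apply/eqP; rewrite eqn_leq; apply/andP; split.
  case: (leqP (top Pi) y) => hty.
    apply: leq_trans (@gmvs_ub _ _ _ p _ setT) _.
    have hX : \max_(j in setT) top (upd (fun _ => Py) i Pi j) <= y.
      by apply/bigmax_leqP => j _; rewrite top_upd; case: (j == i); rewrite ?hPy.
    rewrite hN; apply: maxn_le; [exact: hX | lia].
  apply: leq_trans (@gmvs_ub _ _ _ p _ (setT :\ i)) _.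
  have hX : \max_(j in setT :\ i) top (upd (fun _ => Py) i Pi j) <= y.
    apply/bigmax_leqP => j; rewrite !inE andbT => hj.
    by rewrite top_upd (negbTE hj) hPy.
  apply: maxn_le; [exact: hX | lia].
apply: (@gmvs_lb _ _ _ p); first lia.
move=> S.
case: (boolP [exists j in S, j != i]) => [/existsP [j /andP [hj hji]]| hno].
  apply: leq_trans (leq_maxl _ _).
  have := @leq_bigmax_cond _ (fun k => k \in S) (fun j => top (upd (fun _ => Py) i Pi j)) j hj.
  by rewrite /= top_upd (negbTE hji) hPy.
move/existsPn: hno => hno.
case: (boolP (i \in S)) => hi.
  have -> : S = [set i].
    apply/setP => k; rewrite inE; apply/idP/eqP => [hk|->//].
    by move: (hno k); rewrite hk /= negbK => /eqP.
  have hX := @leq_bigmax_cond _ (fun k => k \in [set i]) (fun j => top (upd (fun _ => Py) i Pi j)) i (set11 i).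
  move: hX; rewrite /= top_upd eqxx => hX.
  case/andP: hy => _ hy; apply: leq_trans hy _.
  rewrite geq_max leq_maxr andbT; exact: leq_trans hX (leq_maxl _ _).
have -> : S = set0.
  apply/setP => k; rewrite inE; apply/negbTE/negP => hk.
  by move: (hno k); rewrite hk /= negbK => /eqP e; move: hi; rewrite -e hk.
rewrite h0; lia.
Qed.

Lemma opt_iff n a b (p : {set 'I_n} -> nat) (hab : a <= b) (hp : monotonic_ballots a b p) (i : 'I_n) (Pi : pref a b) x :
  option_set (@gmvs n a b p) i Pi x <->
  minn (top Pi) (p (setT :\ i)) <= x <= maxn (top Pi) (p [set i]).
Proof.
split.
  move=> [Q <-].
  have := @f_lower _ _ _ p hab hp (upd Q i Pi) i; have := @f_upper _ _ _ p (upd Q i Pi) i.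
  rewrite top_upd eqxx; lia.
by move=> hx; apply: (@achieve _ _ _ p hab hp i Pi x hx).
Qed.

Lemma pl_bounds n a b (p : {set 'I_n} -> nat) (hp : monotonic_ballots a b p) (i : 'I_n) :
  a <= p (setT :\ i) <= b.
Proof. by case: hp => _ _ hr _; apply: hr. Qed.

Lemma pr_bounds n a b (p : {set 'I_n} -> nat) (hp : monotonic_ballots a b p) (i : 'I_n) :
  a <= p [set i] <= b.
Proof. by case: hp => _ _ hr _; apply: hr. Qed.

Lemma exists_pref_tb a b (hab : a <= b) t x : a <= t <= b -> a <= x <= b -> t != x ->
  exists P : pref a b, top P = t /\ forall y, a <= y <= b -> y != x -> prefers P y x.
Proof.
move=> ht hx htx.
have hu : uniq (Xs a b) by apply: iota_uniq.
have htX : t \in Xs a b by rewrite memX.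
have hxX : x \in Xs a b by rewrite memX.
have hxr : x \in rem t (Xs a b) by rewrite mem_rem_uniq // inE eq_sym htx.
set r' := rem x (rem t (Xs a b)).
have hp : perm_eq (t :: rcons r' x) (Xs a b).
  rewrite perm_sym; apply: (perm_trans (perm_to_rem htX)).
  rewrite perm_cons; apply: (perm_trans (perm_to_rem hxr)).
  by rewrite perm_sym perm_rcons.
exists (exist (fun s => perm_eq s (Xs a b)) _ hp); split => //.
move=> y hy hyx; rewrite /prefers; change (index y (t :: rcons r' x) < index x (t :: rcons r' x)); rewrite -cats1 -cat_cons !index_cat.
have hxn : x \notin t :: r'.
  rewrite inE negb_or eq_sym htx /= /r' mem_rem_uniqF //.
  by apply: rem_uniq.
have hyin : y \in t :: r'.
  rewrite inE; case: (altP (y =P t)) => //= hyt.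
  rewrite /r' mem_rem_uniq ?rem_uniq // inE hyx /= mem_rem_uniq // inE hyt /=.
  by rewrite memX.
rewrite (negbTE hxn) hyin; apply: (leq_trans _ (leq_addr _ _)); by rewrite index_mem.
Qed.

Lemma om n a b (p : {set 'I_n} -> nat) (hab : a <= b) (hp : monotonic_ballots a b p) (i : 'I_n)
  (P P' : pref a b) x :
  (forall y, a <= y <= b -> y != x -> prefers P y x) ->
  minn (top P) (p (setT :\ i)) <= x <= maxn (top P) (p [set i]) ->
  ~~ (minn (top P') (p (setT :\ i)) <= x <= maxn (top P') (p [set i])) ->
  obvious_manipulation (@gmvs n a b p) i P P'.
Proof.
move=> hbot hx hnx.
have [_ _ hr _] := hp.
have hl := @pl_bounds _ _ _ p hp i; have hrr := @pr_bounds _ _ _ p hp i.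
have ht := @top_in _ _ hab P; have ht' := @top_in _ _ hab P'.
have [Q hQ] := @achieve _ _ _ p hab hp i P x hx.
have inX' : forall z, option_set (@gmvs n a b p) i P' z -> a <= z <= b /\ z != x.
  move=> z hz0; have hz := proj1 (@opt_iff _ _ _ p hab hp i P' z) hz0; split; first lia.
  by apply/eqP => e; move: hnx; rewrite -e hz.
split.
  exists Q; rewrite hQ.
  have [h1 h2] := inX' (gmvs p (upd Q i P')) (ex_intro _ Q erefl).
  exact: hbot.
left.
have [w' hw'] := @exists_worst _ _ hab P (option_set (@gmvs n a b p) i P')
  (minn (top P') (p (setT :\ i))) (maxn (top P') (p [set i])) ltac:(lia) ltac:(lia) ltac:(lia)
  (@opt_iff _ _ _ p hab hp i P').
exists w', x; split => //; split.
  split; first exact/(@opt_iff _ _ _ p hab hp i P).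
  move=> o /(@opt_iff _ _ _ p hab hp i P o) ho hne; apply: hbot; first lia.
  exact/eqP.
case: hw' => /inX' [h1 h2] _; exact: hbot.
Qed.

Lemma dict_case n a b (p : {set 'I_n} -> nat) (hab : a <= b) (hp : monotonic_ballots a b p) (i : 'I_n) :
  p (setT :\ i) = b -> p [set i] = a -> dictatorial (@gmvs n a b p).
Proof.
move=> hl hr; exists i => P.
have := @f_lower _ _ _ p hab hp P i; have := @f_upper _ _ _ p P i.
have := @top_in _ _ hab (P i); rewrite hl hr; lia.
Qed.

Theorem theorem3 (n a b : nat) (hn : 2 <= n) (hab : a < b)
  (p : {set 'I_n} -> nat) (hp : monotonic_ballots a b p)
  (hnd : ~ dictatorial (@gmvs n a b p)) :
  NOM (@gmvs n a b p) <->
  (forall i : 'I_n,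
     ((p (setT :\ i) == a) || (p (setT :\ i) == a.+1)) /\
     ((p [set i] == b.-1) || (p [set i] == b))).
Proof.
have hab' : a <= b by apply: ltnW.
have [_ _ hr _] := hp.
split.
  move=> hnom i.
  have hl := @pl_bounds _ _ _ p hp i; have hrr := @pr_bounds _ _ _ p hp i.
  have hL : p (setT :\ i) <= a.+1.
    case: (leqP (p (setT :\ i)) a.+1) => // hlt.
    case: (leqP (p [set i]) a) => hra.
      have hra' : p [set i] = a by lia.
      have hlb : p (setT :\ i) != b.
        by apply/eqP => e; apply: hnd; apply: (@dict_case _ _ _ p hab' hp i).
      have [P [hPt hPb]] := @exists_pref_tb _ _ hab' b (p (setT :\ i)) ltac:(lia) ltac:(lia)
        ltac:(by rewrite eq_sym).
      have [P' hP't] := @exists_pref_top _ _ hab' a ltac:(lia).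
      case: (hnom i P P'); apply: (@om _ _ _ p hab' hp i P P' (p (setT :\ i))) => //.
        rewrite hPt; lia.
      rewrite hP't; apply/negP; lia.
    have [P [hPt hPb]] := @exists_pref_tb _ _ hab' a a.+1 ltac:(lia) ltac:(lia)
      ltac:(by rewrite neq_ltn ltnSn).
    have [P' hP't] := @exists_pref_top _ _ hab' (p (setT :\ i)) ltac:(lia).
    case: (hnom i P P'); apply: (@om _ _ _ p hab' hp i P P' a.+1) => //.
      rewrite hPt; lia.
    rewrite hP't; apply/negP; lia.
  have hR : b.-1 <= p [set i].
    case: (leqP b.-1 (p [set i])) => // hlt.
    case: (leqP b (p (setT :\ i))) => hlb.
      have hlb' : p (setT :\ i) = b by lia.
      have hra : p [set i] != a.
        by apply/eqP => e; apply: hnd; apply: (@dict_case _ _ _ p hab' hp i).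
      have [P [hPt hPb]] := @exists_pref_tb _ _ hab' a (p [set i]) ltac:(lia) ltac:(lia)
        ltac:(by rewrite eq_sym).
      have [P' hP't] := @exists_pref_top _ _ hab' b ltac:(lia).
      case: (hnom i P P'); apply: (@om _ _ _ p hab' hp i P P' (p [set i])) => //.
        rewrite hPt; lia.
      rewrite hP't; apply/negP; lia.
    have [P [hPt hPb]] := @exists_pref_tb _ _ hab' b b.-1 ltac:(lia) ltac:(lia)
      ltac:(by apply/eqP; lia).
    have [P' hP't] := @exists_pref_top _ _ hab' (p [set i]) ltac:(lia).
    case: (hnom i P P'); apply: (@om _ _ _ p hab' hp i P P' b.-1) => //.
      rewrite hPt; lia.
    rewrite hP't; apply/negP; lia.
  split.
    have [->|->] : p (setT :\ i) = a \/ p (setT :\ i) = a.+1 by lia.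
      by rewrite eqxx.
    by rewrite eqxx orbT.
  have [->|->] : p [set i] = b.-1 \/ p [set i] = b by lia.
    by rewrite eqxx.
  by rewrite eqxx orbT.
move=> hc i Pi Pi' [[Q hman] hobv].
have [hcl hcr] := hc i.
have hl := @pl_bounds _ _ _ p hp i; have hrr := @pr_bounds _ _ _ p hp i.
have hL : p (setT :\ i) <= a.+1 by case/orP: hcl => /eqP ->; lia.
have hR : b.-1 <= p [set i] by case/orP: hcr => /eqP ->; lia.
have ht := @top_in _ _ hab' Pi; have ht' := @top_in _ _ hab' Pi'.
case: hobv => [[w' [w [[hw'O hw'm] [[hwO hwm] hpw]]]] | [b' [b0 [hb' [[hbO hbm] hpb]]]]].
  have hnot : ~ option_set (@gmvs n a b p) i Pi' w.
    move=> hwO'; case: (altP (w =P w')) => [e|hne].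
      by move: hpw; rewrite e /prefers ltnn.
    by have := hw'm w hwO' (elimN eqP hne); move/prefers_asym; rewrite hpw.
  move: hwO => /(@opt_iff _ _ _ p hab' hp i Pi w) hw.
  have hnw : ~~ (minn (top Pi') (p (setT :\ i)) <= w <= maxn (top Pi') (p [set i])).
    by apply/negP => /(@opt_iff _ _ _ p hab' hp i Pi' w).
  have hwt : w = top Pi by lia.
  have hf : gmvs p (upd Q i Pi) = top Pi.
    case: (altP (gmvs p (upd Q i Pi) =P w)) => [->//|hne].
    have := hwm _ (ex_intro _ Q erefl) (elimN eqP hne); rewrite hwt.
    by move=> h; move: (@not_pref_top _ _ hab' Pi (gmvs p (upd Q i Pi))); rewrite h.
  by move: hman; rewrite hf => h; move: (@not_pref_top _ _ hab' Pi (gmvs p (upd Q i Pi'))); rewrite h.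
have htO : option_set (@gmvs n a b p) i Pi (top Pi).
  apply/(@opt_iff _ _ _ p hab' hp i Pi); lia.
have hb0 : b0 = top Pi.
  case: (altP (b0 =P top Pi)) => // hne.
  by have := hbm _ htO (nesym (elimN eqP hne)); move: (@not_pref_top _ _ hab' Pi b0) => /negbTE ->.
by move: hpb; rewrite hb0; move: (@not_pref_top _ _ hab' Pi b') => /negbTE ->.
Qed.
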